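(* Let $\alpha>0$, $0\le m<s<M$, $f\in\mathcal{F}(m,M,s)$, and $x_0\in[0,\pi]$. Put $l=\pi(s-m)/(M-m)$ and $l^-=\pi-l$. Then $$\eta_\alpha(x_0)M-(M-m)\nu_\alpha(x_0,l^-)\le u_f(x_0)\le \eta_\alpha(x_0)m+(M-m)\nu_\alpha(x_0,l).$$ Equality holds in the right inequality if and only if $f=m+(M-m)\chi_{I(a_m,l)}$ a.e. on $[-\pi,\pi]$, where $a_m=x_0(1-lc_\alpha)$ if $x_0(1-lc_\alpha)<\pi-l$ and $a_m=\pi-l$ otherwise. Equality holds in the left inequality if and only if $f=M-(M-m)\chi_{I(a_m^-,l^-)}$ a.e. on $[-\pi,\pi]$, where $a_m^-=x_0(1-l^-c_\alpha)$ if $x_0(1-l^-c_\alpha)<\pi-l^-$ and $a_m^-=\pi-l^-$ otherwise.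
   Context: Robin problem: for $\alpha>0$ and $f\in L^1[-\pi,\pi]$, find $u\in C^1[-\pi,\pi]$ with $u'$ absolutely continuous on $[-\pi,\pi]$, $-u''=f$ a.e. on $(-\pi,\pi)$, and $-u'(-\pi)+\alpha u(-\pi)=u'(\pi)+\alpha u(\pi)=0$. It has a unique solution $u_f(x)=\int_{-\pi}^{\pi}G(x,y)f(y)\,dy$, where $G(x,y)=-\tfrac12 c_\alpha xy-\tfrac12|x-y|+\tfrac{1}{2c_\alpha}$ and $c_\alpha=\alpha/(1+\alpha\pi)$. For $0\le m<s<M$, $\mathcal{F}(m,M,s)$ is the set of $f\in L^1[-\pi,\pi]$ with $m\le f\le M$ and $\|f\|_{L^1}=2\pi s$. $I(a,l)=[a-l,a+l]$, $\chi_E$ is the characteristic function of $E$. $\eta_\alpha(x)=-\tfrac12x^2+\tfrac{\pi}{\alpha}+\tfrac{\pi^2}{2}$. For $x_0\in[0,\pi]$ and $l\in(0,\pi)$: $\nu_\alpha(x_0,l)=\dfrac{l}{c_\alpha}\Big(1-\dfrac{lc_\alpha}{2}\Big)\big(1-x_0^2c_\alpha^2\big)$ if $x_0<\dfrac{\pi-l}{1-lc_\alpha}$, and $\nu_\alpha(x_0,l)=-\tfrac12(\pi-x_0)^2+l(1-c_\alpha x_0)\big(2\pi-l+\tfrac1\alpha\big)$ otherwise. *)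

(* Defs.v *)
From HB Require Import structures.
From mathcomp Require Import all_boot all_order all_algebra.
From mathcomp Require Import all_classical all_reals all_analysis.
Set Implicit Arguments. Unset Strict Implicit. Unset Printing Implicit Defensive.
Import Order.TTheory GRing.Theory Num.Theory.
Import numFieldNormedType.Exports.
Local Open Scope classical_set_scope.
Local Open Scope ring_scope.

Section RobinDefs.
Variable R : realType.

Definition Ipi : set R := `[- pi, pi]%classic.

Definition c_alpha (alpha : R) : R := alpha / (1 + alpha * pi).

Definition Green (alpha x y : R) : R :=
  - (1/2) * c_alpha alpha * x * y - (1/2) * `|x - y| + 1 / (2 * c_alpha alpha).

Definition u_sol (alpha : R) (f : R -> R) (x : R) : R :=
  Rintegral lebesgue_measure Ipi (fun y => Green alpha x y * f y).

Definition Fclass (m M s : R) (f : R -> R) : Prop :=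
  [/\ measurable_fun Ipi f,
      lebesgue_measure.-integrable Ipi (fun x => (f x)%:E),
      {ae lebesgue_measure, forall x, Ipi x -> m <= f x <= M}
    & Rintegral lebesgue_measure Ipi (fun x => `|f x|) = 2 * pi * s].

Definition eta_alpha (alpha x : R) : R :=
  - (1/2) * x ^+ 2 + pi / alpha + pi ^+ 2 / 2.

Definition nu_alpha (alpha x0 l : R) : R :=
  let c := c_alpha alpha in
  if x0 < (pi - l) / (1 - l * c) then
    l / c * (1 - l * c / 2) * (1 - x0 ^+ 2 * c ^+ 2)
  else
    - (1/2) * (pi - x0) ^+ 2 + l * (1 - c * x0) * (2 * pi - l + 1 / alpha).

Definition chiI (a l x : R) : R := \1_(`[a - l, a + l]%classic) x.

Definition a_opt (alpha x0 l : R) : R :=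
  if x0 * (1 - l * c_alpha alpha) < pi - l then x0 * (1 - l * c_alpha alpha)
  else pi - l.

End RobinDefs.

(* Main.v *)
Require Import Defs.
From HB Require Import structures.
From mathcomp Require Import all_boot all_order all_algebra.
From mathcomp Require Import all_classical all_reals all_analysis.
From mathcomp Require Import ring lra measurable_realfun.
Import Order.TTheory GRing.Theory Num.Theory.
Import numFieldNormedType.Exports.
Local Open Scope classical_set_scope.
Local Open Scope ring_scope.

Ltac fld := field; repeat (apply/andP; split); try done.

Section S.
Context {R : realType}.
Notation mu := (@lebesgue_measure R).

Lemma bnd_of (h : R -> R) (A : set R) (B : R) : (forall x, A x -> `|h x| <= B) ->
  [bounded h x | x in A].
Proof.
move=> hB; exists B; split; first exact: num_real.
by move=> M BM x Ax; exact: le_trans (hB x Ax) (ltW BM).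
Qed.

Lemma affine_cont (k1 K x0 : R) : continuous (fun y : R => k1 * y - (1/2) * `|x0 - y| + K).
Proof.
move=> y.
apply: cvgD; last exact: cvg_cst.
apply: cvgB.
  apply: cvgM; [exact: cvg_cst | exact: cvg_id].
apply: cvgM; first exact: cvg_cst.
apply: cvg_norm.
apply: cvgB; [exact: cvg_cst | exact: cvg_id].
Qed.

Lemma int_affine (a b p q : R) : a <= b ->
  \int[mu]_(x in `[a, b]) (p + q * x) = p * (b - a) + q * (b ^+ 2 - a ^+ 2) / 2.
Proof.
rewrite le_eqVlt => /predU1P[<-|ab].
  by rewrite set_itv1 Rintegral_set1 !subrr !mulr0 mul0r addr0.
pose P : {poly R} := p%:P * 'X + (q / 2)%:P * 'X ^+ 2.
have PE y : P.[y] = p * y + q / 2 * y ^+ 2 by rewrite /P !hornerE.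
have P'E y : (deriv P).[y] = p + q * y.
  rewrite /P !poly.derivE !hornerE /=.
  by field.
rewrite /Rintegral (@continuous_FTC2 _ _ (horner P))//.
- by rewrite -EFinB /= !PE; field.
- apply: continuous_subspaceT => y.
  apply: cvgD; first exact: cvg_cst.
  apply: cvgM; [exact: cvg_cst | exact: cvg_id].
- split.
  + by move=> y _; exact: ex_derive.
  + exact/cvg_at_right_filter/continuous_horner.
  + exact/cvg_at_left_filter/continuous_horner.
- by move=> y _; rewrite derive1E derive_val P'E.
Qed.

Lemma cont_int (g : R -> R) (a b : R) : continuous g ->
  mu.-integrable `[a, b] (EFin \o g).
Proof.
move=> cg; apply: continuous_compact_integrable; first exact: segment_compact.
exact: continuous_subspaceT.
Qed.

Lemma int_tent (k1 K x0 a b : R) : a <= x0 -> x0 <= b ->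
  \int[mu]_(y in `[a, b]) (k1 * y - (1/2) * `|x0 - y| + K) =
  k1 * (b ^+ 2 - a ^+ 2) / 2 - ((x0 - a) ^+ 2 + (b - x0) ^+ 2) / 4 + K * (b - a).
Proof.
move=> ax xb.
set g := (fun y => k1 * y - (1/2) * `|x0 - y| + K).
have ig : mu.-integrable `[a, b] (EFin \o g) by apply: cont_int; exact: affine_cont.
have := @Rintegral_itvB R g (BLeft a) (BRight b) x0 ig.
rewrite !bnd_simp => /(_ ax xb) H.
have -> : \int[mu]_(y in `[a, b]) g y =
   \int[mu]_(y in `[a, x0]) g y + \int[mu]_(y in `]x0, b]) g y.
  by rewrite -H addrC subrK.
have -> : \int[mu]_(y in `[a, x0]) g y =
    \int[mu]_(y in `[a, x0]) ((K - x0 / 2) + (k1 + 1/2) * y).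
  apply: eq_Rintegral => y; rewrite inE /= in_itv /= => /andP[_ yx].
  rewrite /g ger0_norm ?subr_ge0 //; by field.
rewrite (int_affine _ _ (K - x0/2) (k1 + 1/2) ax).
have -> : \int[mu]_(y in `]x0, b]) g y =
    \int[mu]_(y in `]x0, b]) ((K + x0 / 2) + (k1 - 1/2) * y).
  apply: eq_Rintegral => y; rewrite inE /= in_itv /= => /andP[xy _].
  rewrite /g ltr0_norm ?subr_lt0 //; by field.
rewrite Rintegral_itv_obnd_cbnd; last first.
  apply: (@integrableS _ _ _ mu `[x0, b]) => //; first exact: subset_itv_oc_cc.
  apply: cont_int => z; apply: cvgD; first exact: cvg_cst.
  apply: cvgM; [exact: cvg_cst | exact: cvg_id].
rewrite (int_affine _ _ (K + x0/2) (k1 - 1/2) xb); by field.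
Qed.

End S.

Section M.
Context {R : realType}.
Notation mu := (@lebesgue_measure R).

Lemma aeS (P Q : R -> Prop) : (forall x, P x -> Q x) ->
  {ae mu, forall x, P x} -> {ae mu, forall x, Q x}.
Proof. by move=> PQ; apply: (@filterS _ _ (ae_filter_ringOfSetsType mu)). Qed.

Lemma aeS2 (P Q S : R -> Prop) : (forall x, P x -> Q x -> S x) ->
  {ae mu, forall x, P x} -> {ae mu, forall x, Q x} -> {ae mu, forall x, S x}.
Proof. by move=> PQ; apply: (@filterS2 _ _ (ae_filter_ringOfSetsType mu)). Qed.

Lemma sign_int (D : set R) (k : R -> R) : measurable D ->
  mu.-integrable D (EFin \o k) -> {ae mu, forall x, D x -> 0 <= k x} ->
  0 <= \int[mu]_(x in D) k x /\
  (\int[mu]_(x in D) k x = 0 <-> {ae mu, forall x, D x -> k x = 0}).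
Proof.
move=> mD ik k0.
have mk := measurable_int mu ik.
have mk' : measurable_fun D k by apply/measurable_EFinP.
have mak : measurable_fun D (EFin \o (Num.norm \o k)).
  by apply/measurable_EFinP; apply: measurableT_comp.
have E : (\int[mu]_(x in D) (EFin \o k) x = \int[mu]_(x in D) (EFin \o (Num.norm \o k)) x)%E.
  apply: ae_eq_integral => //.
  by apply: aeS k0 => x h Dx /=; rewrite ger0_norm //; exact: h.
have fin : (\int[mu]_(x in D) (EFin \o k) x)%E \is a fin_num.
  by apply: integrable_fin_num.
split.
  by rewrite /Rintegral E fine_ge0 // integral_ge0 // => x _ /=; rewrite lee_fin.
split => [k0'|ak].
  have : (\int[mu]_(x in D) `|(EFin \o k) x| = 0)%E.
    rewrite -[LHS]/(\int[mu]_(x in D) (EFin \o (Num.norm \o k)) x)%E -E.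
    by rewrite -(fineK fin) -[fine _]/(\int[mu]_(x in D) k x) k0'.
  move/(ae_eq_integral_abs mu mD mk).
  by apply: aeS => x h Dx; move: (h Dx) => /= [].
rewrite /Rintegral (ae_eq_integral (cst 0%E)) //.
  by rewrite integral0.
by apply: aeS ak => x h Dx /=; rewrite h.
Qed.

Lemma ae_neq (p : R) : {ae mu, forall x, x != p}.
Proof.
exists [set p]; split => //; first by rewrite lebesgue_measure_set1.
by move=> x /= /negP; rewrite negbK => /eqP.
Qed.

End M.


Section G.
Context {R : realType}.
Variables (alpha x0 : R).
Hypothesis ha : 0 < alpha.
Hypothesis hx0 : 0 <= x0 <= pi.

Let c := c_alpha alpha.

Lemma c_gt0 : 0 < c.
Proof. by rewrite /c /c_alpha divr_gt0 // addr_gt0 // mulr_gt0 // pi_gt0. Qed.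

Lemma c_pi : c * (pi + 1 / alpha) = 1.
Proof.
rewrite /c /c_alpha; move: (pi_gt0 R); move: (pi : R) => P hP.
have ? : alpha != 0 by rewrite gt_eqF.
have ? : 1 + alpha * P != 0 by rewrite gt_eqF // addr_gt0 // mulr_gt0.
by fld.
Qed.

Lemma cx0_lt1 : c * x0 < 1.
Proof.
have := c_pi; have := c_gt0; have := pi_gt0 R.
have : 0 < 1 / alpha by rewrite divr_gt0.
case/andP: hx0 => ? ?. nra.
Qed.

Lemma cpi_lt1 : c * pi < 1.
Proof.
have := c_pi; have := c_gt0; have := pi_gt0 R.
have : 0 < 1 / alpha by rewrite divr_gt0.
nra.
Qed.

Let u := c * x0.
Let G0 := Green alpha x0 x0.

Lemma Gleft y : y <= x0 -> Green alpha x0 y = G0 - (1 - u) / 2 * (x0 - y).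
Proof.
move=> yx; rewrite /G0 /Green /u subrr normr0 ger0_norm ?subr_ge0 //.
rewrite -/c; ring.
Qed.

Lemma Gright y : x0 <= y -> Green alpha x0 y = G0 - (1 + u) / 2 * (y - x0).
Proof.
move=> yx; rewrite /G0 /Green /u subrr normr0 ler0_norm ?subr_le0 //.
rewrite -/c; ring.
Qed.

Lemma aE L : a_opt alpha x0 L =
  if x0 - L * u < pi - L then x0 - L * u else pi - L.
Proof. by rewrite /a_opt /u -/c; have -> : x0 * (1 - L * c) = x0 - L * (c * x0) by ring. Qed.

Lemma u_ge0 : 0 <= u.
Proof. by rewrite /u mulr_ge0 // ?(ltW c_gt0) //; case/andP: hx0. Qed.

Lemma geom (L : R) : 0 < L < pi -> let a := a_opt alpha x0 L in
  [/\ -pi <= a - L, a + L <= pi, a - L <= x0 & x0 <= a + L].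
Proof.
move=> /andP[L0 Lpi] a; rewrite /a aE.
have u1 := cx0_lt1; rewrite -/c -/u in u1.
have u0 := u_ge0.
case/andP: hx0 => x00 x0pi.
have up : u * L <= L by nra.
have h0 : 0 <= x0 - L * u.
  have := cpi_lt1; have := c_gt0 => c0 cp.
  have : L * c < 1 by nra.
  rewrite /u; nra.
case: ifP => h; split; nra.
Qed.

Lemma thr (L y : R) : 0 < L < pi -> -pi <= y <= pi ->
  let a := a_opt alpha x0 L in let t := Green alpha x0 (a - L) in
  [/\ a - L < y < a + L -> t < Green alpha x0 y,
      y < a - L \/ a + L < y -> Green alpha x0 y < t,
      y = a - L -> Green alpha x0 y = t &
      y = a + L -> t <= Green alpha x0 y].
Proof.
move=> hL hy a t.
have [g1 g2 g3 g4] := geom L hL; rewrite -/a in g1 g2 g3 g4.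
have ht : t = G0 - (1 - u) / 2 * (x0 - (a - L)) by rewrite /t Gleft.
have u1 := cx0_lt1; rewrite -/c -/u in u1.
have u0 := u_ge0.
case/andP: hx0 => x00 x0pi.
case/andP: hL => L0 Lpi.
case/andP: hy => y1 y2.
have aE' := aE L; rewrite -/a in aE'.
have h0 : 0 <= x0 - L * u.
  have := cpi_lt1; have := c_gt0 => c0 cp.
  have : L * c < 1 by nra.
  rewrite /u; nra.
have [yx|xy] := lerP y x0.
  rewrite Gleft // ht.
  split => [/andP[h1 h2]|[h1|h1]|h1|h1]; try nra.
rewrite (Gright _ (ltW xy)) ht.
move: aE'; case: (ltP (x0 - L * u) (pi - L)) => h aE'.
  split => [/andP[h1 h2]|[h1|h1]|h1|h1]; try nra.
split => [/andP[h1 h2]|[h1|h1]|h1|h1]; try nra.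
Qed.

Lemma G_aff (t : R) : (fun y => Green alpha x0 y - t) =
  (fun y => (-(1/2) * c * x0) * y - (1/2) * `|x0 - y| + (1 / (2 * c) - t)).
Proof. by apply/funext => y; rewrite /Green -/c; ring. Qed.

Lemma intD t : \int[lebesgue_measure]_(y in @Ipi R) (Green alpha x0 y - t) =
  eta_alpha alpha x0 - 2 * pi * t.
Proof.
case/andP: hx0 => x00 x0pi.
have hpi := pi_gt0 R.
rewrite G_aff /Ipi int_tent; [|lra|lra].
rewrite /eta_alpha /c /c_alpha; move: (pi : R) hpi => P hP.
have ? : alpha != 0 by rewrite gt_eqF.
have ? : 1 + alpha * P != 0 by rewrite gt_eqF // addr_gt0 // mulr_gt0.
by fld.
Qed.

Lemma intJ L t : 0 < L < pi ->
  \int[lebesgue_measure]_(y in `[a_opt alpha x0 L - L, a_opt alpha x0 L + L])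
     (Green alpha x0 y - t) = nu_alpha alpha x0 L - 2 * L * t.
Proof.
move=> hL; have [g1 g2 g3 g4] := geom L hL.
rewrite G_aff int_tent //.
have Lc : 0 < 1 - L * c.
  have := cpi_lt1; have := c_gt0; case/andP: hL => ? ?; nra.
rewrite /nu_alpha /a_opt -/c ltr_pdivlMr //.
have ? : alpha != 0 by rewrite gt_eqF.
have hpi := pi_gt0 R.
case: ifP => _; rewrite /c /c_alpha; move: (pi : R) hpi => P hP;
  have ? : 1 + alpha * P != 0 by rewrite gt_eqF // addr_gt0 // mulr_gt0.
  by fld.
by fld.
Qed.


Notation mu := (@lebesgue_measure R).

Lemma mD : measurable (@Ipi R : set (measurableTypeR R)).
Proof. exact: measurable_itv. Qed.

Lemma cont_Gt t : continuous (fun y => Green alpha x0 y - t).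
Proof. by rewrite G_aff; exact: affine_cont. Qed.

Lemma cont_G : continuous (Green alpha x0).
Proof.
have -> : Green alpha x0 = (fun y => Green alpha x0 y - 0).
  by apply/funext => y; rewrite subr0.
exact: cont_Gt.
Qed.

Lemma intM_cont (h g : R -> R) : continuous h ->
  mu.-integrable (@Ipi R) (EFin \o g) ->
  mu.-integrable (@Ipi R) (EFin \o (fun y => h y * g y)).
Proof.
move=> ch ig.
have bh : [bounded h x | x in @Ipi R].
  have /compact_bounded[B [_ mrt]] := continuous_compact
     (continuous_subspaceT (A := @Ipi R) ch) (@segment_compact _ (- pi) pi).
  by exists B; split; rewrite ?num_real // => ? ? ? ?; exact: mrt.
have mD' : measurable (@Ipi R) by exact: mD.
have mh : measurable_fun (@Ipi R) h.
  by apply: measurable_funTS; exact: continuous_measurable_fun.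
have := @integrableMr _ (measurableTypeR R) R mu (@Ipi R) mD' h (EFin \o g) mh bh ig.
apply: eq_integrable => [|y _ /=]; first exact: mD.
by rewrite EFinM.
Qed.

Lemma int_bnd (g : R -> R) (B : R) : measurable_fun (@Ipi R) g ->
  (forall y, `|g y| <= B) -> mu.-integrable (@Ipi R) (EFin \o g).
Proof.
move=> mg gB; apply: measurable_bounded_integrable => //.
- exact: mD.
- by apply: compact_finite_measure; exact: segment_compact.
- by apply: (@bnd_of _ g _ B) => y _; exact: gB.
Qed.

Lemma ident L t p q (g phi : R -> R) : 0 < L < pi ->
  mu.-integrable (@Ipi R) (EFin \o g) ->
  (forall y, phi y = p + q * chiI (a_opt alpha x0 L) L y) ->
  \int[mu]_(y in @Ipi R) ((Green alpha x0 y - t) * (g y - phi y)) =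
  \int[mu]_(y in @Ipi R) (Green alpha x0 y * g y) - t * \int[mu]_(y in @Ipi R) g y
   - p * (eta_alpha alpha x0 - 2 * pi * t) - q * (nu_alpha alpha x0 L - 2 * L * t).
Proof.
move=> hL ig phiE.
set a := a_opt alpha x0 L.
set J := `[a - L, a + L]%classic.
have [g1 g2 g3 g4] := geom L hL; rewrite -/a in g1 g2 g3 g4.
have mJ : measurable J by exact: measurable_itv.
have JD : J `<=` @Ipi R.
  by move=> y; rewrite /J /Ipi /= !in_itv /= => /andP[h1 h2]; apply/andP; split; lra.
have mphi : measurable_fun (@Ipi R) phi.
  have -> : phi = (fun y => p + q * \1_J y).
    by apply/funext => y; rewrite phiE.
  by apply: measurable_funD => //; apply: measurable_funM => //.
have iphi : mu.-integrable (@Ipi R) (EFin \o phi).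
  apply: (@int_bnd _ (`|p| + `|q|)) => // y.
  rewrite phiE; apply: (le_trans (ler_normD _ _)); rewrite lerD2l normrM.
  rewrite /chiI indicE; case: (_ \in _) => /=; rewrite ?normr1 ?normr0 ?mulr1 ?mulr0 //.
have iGt t' : mu.-integrable (@Ipi R) (EFin \o (fun y => Green alpha x0 y - t')).
  exact: cont_int (cont_Gt t').
have ccst (r : R) : continuous (fun _ : R => r) by move=> ?; exact: cvg_cst.
have ichi : mu.-integrable (@Ipi R) (EFin \o chiI a L).
  apply: (@int_bnd _ 1) => [|y].
    by apply: measurable_indic; exact: mJ.
  by rewrite /chiI indicE; case: (_ \in _); rewrite ?normr1 ?normr0.
have E1 : \int[mu]_(y in @Ipi R) ((Green alpha x0 y - t) * (g y - phi y)) =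
   \int[mu]_(y in @Ipi R) ((Green alpha x0 y - t) * g y) -
   \int[mu]_(y in @Ipi R) ((Green alpha x0 y - t) * phi y).
  rewrite -RintegralB //; first by apply: eq_Rintegral => y _; ring.
  - exact: mD.
  - exact: intM_cont (cont_Gt t) ig.
  - exact: intM_cont (cont_Gt t) iphi.
have E2 : \int[mu]_(y in @Ipi R) ((Green alpha x0 y - t) * g y) =
   \int[mu]_(y in @Ipi R) (Green alpha x0 y * g y) - t * \int[mu]_(y in @Ipi R) g y.
  rewrite -RintegralZl //; last exact: mD.
  rewrite -RintegralB //; first by apply: eq_Rintegral => y _; ring.
  - exact: mD.
  - exact: intM_cont cont_G ig.
  - exact: intM_cont (ccst t) ig.
have E3 : \int[mu]_(y in @Ipi R) ((Green alpha x0 y - t) * phi y) =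
   p * \int[mu]_(y in @Ipi R) (Green alpha x0 y - t) +
   q * \int[mu]_(y in @Ipi R) ((Green alpha x0 y - t) * chiI a L y).
  rewrite -RintegralZl //; last exact: mD.
  rewrite -[X in _ + X]RintegralZl //; last 2 first.
    exact: mD.
    exact: intM_cont (cont_Gt t) ichi.
  rewrite -RintegralD //.
  - by apply: eq_Rintegral => y _; rewrite phiE; ring.
  - exact: mD.
  - exact: intM_cont (ccst p) (iGt t).
  - apply: (@intM_cont (fun _ => q) (fun y => (Green alpha x0 y - t) * chiI a L y)) => //.
    exact: intM_cont (cont_Gt t) ichi.
have E4 : \int[mu]_(y in @Ipi R) ((Green alpha x0 y - t) * chiI a L y) =
   \int[mu]_(y in J) (Green alpha x0 y - t).
  have -> : J = @Ipi R `&` J by rewrite setIidr.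
  rewrite Rintegral_mkcondr; apply: eq_Rintegral => y _.
  rewrite patchE /chiI indicE; case: (_ \in _); rewrite ?mulr1 ?mulr0 //.
rewrite E1 E2 E3 E4 intD intJ //; ring.
Qed.

Lemma chiE (a L y : R) : chiI a L y = if (a - L <= y <= a + L) then 1 else 0.
Proof. by rewrite /chiI indicE mem_setE in_itv /=; case: ifP. Qed.

Lemma pw (L y : R) : 0 < L < pi -> -pi <= y <= pi ->
  let a := a_opt alpha x0 L in let t := Green alpha x0 (a - L) in
  [/\ (a - L <= y <= a + L -> chiI a L y = 1 /\ 0 <= Green alpha x0 y - t),
      (~~ (a - L <= y <= a + L) -> chiI a L y = 0 /\ Green alpha x0 y - t < 0) &
      (y != a - L -> y != a + L -> Green alpha x0 y - t != 0)].
Proof.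
move=> hL hy a t.
have [t1 t2 t3 t4] := thr L y hL hy; rewrite -/a -/t in t1 t2 t3 t4.
split.
- move=> h; rewrite chiE h; split => //; rewrite subr_ge0.
  case/andP: h; rewrite le_eqVlt => /predU1P[e|h1].
    by rewrite (t3 (esym e)).
  rewrite le_eqVlt => /predU1P[e|h2]; first exact: t4.
  by apply: ltW; apply: t1; rewrite h1 h2.
- move=> h; rewrite chiE (negbTE h); split => //; rewrite subr_lt0.
  apply: t2; move: h; rewrite negb_and -!ltNge => /orP[h|h]; [left|right] => //.
- move=> n1 n2; rewrite subr_eq0; apply/negP => /eqP e.
  have [h|h] := boolP (a - L < y < a + L).
    by move: (t1 h); rewrite e ltxx.
  have : y < a - L \/ a + L < y.
    move: h; rewrite negb_and -!leNgt !le_eqVlt (negbTE n1) [a + L == y]eq_sym (negbTE n2) /=.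
    by case/orP; [left|right].
  by move/t2; rewrite e ltxx.
Qed.

Lemma int_step (a L p q : R) :
  mu.-integrable (@Ipi R) (EFin \o (fun y => p + q * chiI a L y)).
Proof.
have mJ : measurable (`[a - L, a + L]%classic : set R) by exact: measurable_itv.
apply: (@int_bnd _ (`|p| + `|q|)) => [|y].
  by apply: measurable_funD => //; apply: measurable_funM => //; exact: measurable_indic.
apply: (le_trans (ler_normD _ _)); rewrite lerD2l normrM.
by rewrite /chiI indicE; case: (_ \in _) => /=; rewrite ?normr1 ?normr0 ?mulr1 ?mulr0.
Qed.

Lemma intB (g h : R -> R) : mu.-integrable (@Ipi R) (EFin \o g) ->
  mu.-integrable (@Ipi R) (EFin \o h) ->
  mu.-integrable (@Ipi R) (EFin \o (fun y => g y - h y)).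
Proof.
move=> ig ih; have := integrableB mD ig ih.
by apply: eq_integrable => [|y _ /=]; [exact: mD|rewrite EFinB].
Qed.

Lemma Rint_ae (g h : R -> R) : mu.-integrable (@Ipi R) (EFin \o g) ->
  mu.-integrable (@Ipi R) (EFin \o h) ->
  {ae mu, forall y, @Ipi R y -> g y = h y} ->
  \int[mu]_(y in @Ipi R) g y = \int[mu]_(y in @Ipi R) h y.
Proof.
move=> ig ih gh; rewrite /Rintegral; congr fine.
apply: (@ae_eq_integral _ _ _ mu (@Ipi R) (EFin \o h) (EFin \o g)).
- exact: mD.
- exact: measurable_int ig.
- exact: measurable_int ih.
- by apply: aeS gh => y e Dy /=; rewrite e.
Qed.

Lemma Dbnd y : @Ipi R y -> -pi <= y <= pi.
Proof. by rewrite /Ipi /= in_itv. Qed.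

Lemma theorem2_aux (m M s : R) (f : R -> R) :
  0 <= m -> m < s -> s < M ->
  Fclass m M s f ->
  let l := pi * (s - m) / (M - m) in
  let lm := pi - l in
  [/\ eta_alpha alpha x0 * M - (M - m) * nu_alpha alpha x0 lm <= u_sol alpha f x0,
      u_sol alpha f x0 <= eta_alpha alpha x0 * m + (M - m) * nu_alpha alpha x0 l,
      u_sol alpha f x0 = eta_alpha alpha x0 * m + (M - m) * nu_alpha alpha x0 l <->
        {ae lebesgue_measure, forall x, Ipi x ->
           f x = m + (M - m) * chiI (a_opt alpha x0 l) l x}
    & eta_alpha alpha x0 * M - (M - m) * nu_alpha alpha x0 lm = u_sol alpha f x0 <->
        {ae lebesgue_measure, forall x, Ipi x ->
           f x = M - (M - m) * chiI (a_opt alpha x0 lm) lm x}].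
Proof.
move=> hm hms hsM [mf intf hb hint] l lm.
have Mm : 0 < M - m by lra.
have hpi := pi_gt0 R.
have el : l * (M - m) = pi * (s - m).
  by rewrite /l; field; rewrite gt_eqF.
have hl : 0 < l < pi.
  apply/andP; split.
    by rewrite /l divr_gt0 // mulr_gt0 // subr_gt0.
  have : l * (M - m) < pi * (M - m) by rewrite el; nra.
  by rewrite ltr_pM2r.
have hlm : 0 < lm < pi by rewrite /lm; case/andP: hl => ? ?; apply/andP; split; lra.
have ifD : \int[mu]_(y in @Ipi R) f y = 2 * pi * s.
  rewrite -hint; apply: Rint_ae => //.
    exact: integrable_norm intf.
  by apply: aeS hb => y h Dy; rewrite ger0_norm //; case/andP: (h Dy) => h1 _; lra.
have uE : u_sol alpha f x0 = \int[mu]_(y in @Ipi R) (Green alpha x0 y * f y) by [].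
set a := a_opt alpha x0 l.
set t := Green alpha x0 (a - l).
set phi := fun y => m + (M - m) * chiI a l y.
have I1 := @ident l t m (M - m) f phi hl intf (fun y => erefl).
have iphi : mu.-integrable (@Ipi R) (EFin \o phi) by exact: int_step.
have ik1 : mu.-integrable (@Ipi R)
   (EFin \o (fun y => (Green alpha x0 y - t) * (f y - phi y))).
  apply: (@intM_cont (fun y => Green alpha x0 y - t) (fun y => f y - phi y)) => //.
  exact: cont_Gt.
  exact: intB.
have ik : mu.-integrable (@Ipi R)
   (EFin \o (fun y => (Green alpha x0 y - t) * (phi y - f y))).
  apply: (@intM_cont (fun y => Green alpha x0 y - t) (fun y => phi y - f y)) => //.
  exact: cont_Gt.
  exact: intB.
have Ik : \int[mu]_(y in @Ipi R) ((Green alpha x0 y - t) * (phi y - f y)) =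
   eta_alpha alpha x0 * m + (M - m) * nu_alpha alpha x0 l - u_sol alpha f x0.
  transitivity (\int[mu]_(y in @Ipi R) (-1 * ((Green alpha x0 y - t) * (f y - phi y)))).
    by apply: eq_Rintegral => y _; ring.
  rewrite RintegralZl //; last exact: mD.
  rewrite I1 ifD uE.
  have -> : 2 * pi * s = 2 * pi * m + 2 * (l * (M - m)) by rewrite el; ring.
  ring.
have k0 : {ae mu, forall y, @Ipi R y -> 0 <= (Green alpha x0 y - t) * (phi y - f y)}.
  apply: aeS hb => y h Dy; case/andP: (h Dy) => h1 h2.
  have [p1 p2 _] := pw l y hl (Dbnd _ Dy); rewrite -/a -/t in p1 p2.
  have [hin|hout] := boolP (a - l <= y <= a + l).
    have [c1 c2] := p1 hin; rewrite /phi c1 mulr1.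
    by apply: mulr_ge0 => //; lra.
  have [c1 c2] := p2 hout; rewrite /phi c1 mulr0 addr0.
  by apply: mulr_le0; lra.
have [S0 S1] := sign_int _ _ mD ik k0.
rewrite Ik in S0 S1.
set a' := a_opt alpha x0 lm.
set t' := Green alpha x0 (a' - lm).
set psi := fun y => M - (M - m) * chiI a' lm y.
have I2 := @ident lm t' M (- (M - m)) f psi hlm intf (fun y => ltac:(rewrite /psi; ring)).
have ipsi : mu.-integrable (@Ipi R) (EFin \o psi).
  have := int_step a' lm M (- (M - m)).
  by apply: eq_integrable => [|y _ /=]; [exact: mD|rewrite /psi; congr EFin; ring].
have ik2 : mu.-integrable (@Ipi R)
   (EFin \o (fun y => (Green alpha x0 y - t') * (f y - psi y))).
  apply: (@intM_cont (fun y => Green alpha x0 y - t') (fun y => f y - psi y)) => //.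
  exact: cont_Gt.
  exact: intB.
have Ik2 : \int[mu]_(y in @Ipi R) ((Green alpha x0 y - t') * (f y - psi y)) =
   u_sol alpha f x0 - (eta_alpha alpha x0 * M - (M - m) * nu_alpha alpha x0 lm).
  rewrite I2 ifD uE.
  have -> : 2 * pi * s = 2 * pi * M - 2 * (lm * (M - m)) by rewrite /lm mulrBl el; ring.
  ring.
have k2 : {ae mu, forall y, @Ipi R y -> 0 <= (Green alpha x0 y - t') * (f y - psi y)}.
  apply: aeS hb => y h Dy; case/andP: (h Dy) => h1 h2.
  have [p1 p2 _] := pw lm y hlm (Dbnd _ Dy); rewrite -/a' -/t' in p1 p2.
  have [hin|hout] := boolP (a' - lm <= y <= a' + lm).
    have [c1 c2] := p1 hin; rewrite /psi c1 mulr1.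
    by apply: mulr_ge0 => //; lra.
  have [c1 c2] := p2 hout; rewrite /psi c1 mulr0 subr0.
  by apply: mulr_le0; lra.
have [T0 T1] := sign_int _ _ mD ik2 k2.
rewrite Ik2 in T0 T1.
split.
- lra.
- lra.
- split => [e|ae].
  + have /S1 h0 : eta_alpha alpha x0 * m + (M - m) * nu_alpha alpha x0 l -
       u_sol alpha f x0 = 0 by rewrite e subrr.
    have hn : {ae mu, forall y, y != a - l /\ y != a + l}.
      exact: aeS2 (fun y (n1 : y != a - l) (n2 : y != a + l) => conj n1 n2)
        (ae_neq (a - l)) (ae_neq (a + l)).
    apply: aeS2 hn h0 => y [n1 n2] hz Dy.
    have [_ _ p3] := pw l y hl (Dbnd _ Dy); rewrite -/a -/t in p3.
    move: (hz Dy) => /eqP; rewrite mulf_eq0 (negbTE (p3 n1 n2)) /= subr_eq0.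
    by move/eqP => <-.
  + apply/eqP; rewrite eq_sym -subr_eq0; apply/eqP; apply/S1.
    by apply: aeS ae => y e Dy; rewrite /phi -e // subrr mulr0.
- split => [e|ae].
  + have /T1 h0 : u_sol alpha f x0 - (eta_alpha alpha x0 * M -
       (M - m) * nu_alpha alpha x0 lm) = 0 by rewrite e subrr.
    have hn : {ae mu, forall y, y != a' - lm /\ y != a' + lm}.
      exact: aeS2 (fun y (n1 : y != a' - lm) (n2 : y != a' + lm) => conj n1 n2)
        (ae_neq (a' - lm)) (ae_neq (a' + lm)).
    apply: aeS2 hn h0 => y [n1 n2] hz Dy.
    have [_ _ p3] := pw lm y hlm (Dbnd _ Dy); rewrite -/a' -/t' in p3.
    move: (hz Dy) => /eqP; rewrite mulf_eq0 (negbTE (p3 n1 n2)) /= subr_eq0.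
    by move/eqP.
  + apply/eqP; rewrite eq_sym -subr_eq0; apply/eqP; apply/T1.
    by apply: aeS ae => y e Dy; rewrite /psi -e // subrr mulr0.
Qed.
End G.

Theorem theorem2 (R : realType) (alpha m M s : R) (f : R -> R) (x0 : R) :
  0 < alpha -> 0 <= m -> m < s -> s < M ->
  Fclass m M s f ->
  0 <= x0 <= pi ->
  let l := pi * (s - m) / (M - m) in
  let lm := pi - l in
  [/\ eta_alpha alpha x0 * M - (M - m) * nu_alpha alpha x0 lm <= u_sol alpha f x0,
      u_sol alpha f x0 <= eta_alpha alpha x0 * m + (M - m) * nu_alpha alpha x0 l,
      u_sol alpha f x0 = eta_alpha alpha x0 * m + (M - m) * nu_alpha alpha x0 l <->
        {ae lebesgue_measure, forall x, Ipi x ->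
           f x = m + (M - m) * chiI (a_opt alpha x0 l) l x}
    & eta_alpha alpha x0 * M - (M - m) * nu_alpha alpha x0 lm = u_sol alpha f x0 <->
        {ae lebesgue_measure, forall x, Ipi x ->
           f x = M - (M - m) * chiI (a_opt alpha x0 lm) lm x}].
Proof.
move=> ha hm hms hsM hF hx0.
exact: (@theorem2_aux R alpha x0 ha hx0 m M s f hm hms hsM hF).
Qed.
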